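(* Let $\mathbb{K}$ be a field, $S=\mathbb{K}[x_1,\ldots,x_n]$, and let $I\subseteq S$ be a support-$2$ monomial ideal such that the girth of $G(I)$ is at least six. Let $\{x_i,x_j\}\in E(G(I))$ be such that $\alpha_{i,j}\geq 2$. Suppose that $d(x_i,x_\ell)\ge 2$ for every leaf vertex $x_\ell$ of $G(I)$, or that $d(x_j,x_\ell)\ge 2$ for every leaf vertex $x_\ell$ of $G(I)$. Then $I^{(1)}\neq I$.
   Context: For a monomial ideal $I$, $\mathcal{G}(I)$ denotes its minimal set of monomial generators. $I$ is a support-$2$ monomial ideal if $\mathcal{G}(I)\subseteq\{x_i^ax_j^b : 1\le i<j\le n,\ a,b\ge 1\}$. The underlying simple graph $G(I)$ has vertices $x_1,\ldots,x_n$ and an edge $\{x_i,x_j\}$ whenever some element of $\mathcal{G}(I)$ has support $\{x_i,x_j\}$. For an edge $\{x_i,x_j\}$, $\alpha_{i,j}$ is the number of elements of $\mathcal{G}(I)$ whose support is exactly $\{x_i,x_j\}$. The girth of a graph is the length of its shortest cycle; a leaf is a vertex of degree $1$; $d(x,y)$ is the length of a shortest path between $x$ and $y$. $I^{(1)}=\bigcap_{P\in\mathrm{MinAss}(I)}(IS_P\cap S)$, the intersection of the primary components of $I$ at its minimal primes. *)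

(* Defs.v *)
From HB Require Import structures.
From mathcomp Require Import all_boot all_order all_algebra.
From mathcomp Require Import mpoly.
Set Implicit Arguments. Unset Strict Implicit. Unset Printing Implicit Defensive.
Import GRing.Theory.
Local Open Scope ring_scope.

Section MonIdeals.
Variables (K : fieldType) (n : nat).
Local Notation S := {mpoly K[n]}.

Definition polyset := S -> Prop.

Definition ideal_gen (G : seq S) : polyset :=
  fun f => exists h : S -> S, f = \sum_(g <- G) h g * g.

Definition is_ideal (J : polyset) : Prop :=
  [/\ J 0, (forall a b, J a -> J b -> J (a + b)) & (forall r a, J a -> J (r * a))].

Definition prime_ideal (P : polyset) : Prop :=
  [/\ is_ideal P, ~ P 1 & forall a b, P (a * b) -> P a \/ P b].

Definition subideal (J J' : polyset) : Prop := forall f, J f -> J' f.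

Definition minimal_prime (I P : polyset) : Prop :=
  [/\ prime_ideal P, subideal I P &
      forall Q, prime_ideal Q -> subideal I Q -> subideal Q P -> subideal P Q].

(* I S_P \cap S = { f | exists g \notin P, g f \in I } *)
Definition loc_contract (I P : polyset) : polyset :=
  fun f => exists g, ~ P g /\ I (g * f).

(* I^{(1)} : intersection of I S_P \cap S over the minimal primes P of I *)
Definition symb1 (I : polyset) : polyset :=
  fun f => forall P, minimal_prime I P -> loc_contract I P f.

Definition msupp (m : 'X_{1..n}) : {set 'I_n} := [set i | 0 < m i]%N.

Definition mdiv (m m' : 'X_{1..n}) : bool := [forall i, m i <= m' i]%N.

Definition support2 (m : 'X_{1..n}) : Prop :=
  exists i j : 'I_n, (i < j)%N /\ msupp m = [set i; j].

(* gens is the minimal monomial generating set G(I) of the ideal it generates: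
   a duplicate-free list of monomials none of which divides another one. *)
Definition minimal_monomial_gens (gens : seq 'X_{1..n}) : Prop :=
  uniq gens /\ forall m m', m \in gens -> m' \in gens -> m != m' -> ~~ mdiv m m'.

Definition mon_ideal (gens : seq 'X_{1..n}) : polyset :=
  ideal_gen [seq 'X_[m] | m <- gens].

Definition gadj (gens : seq 'X_{1..n}) : rel 'I_n :=
  fun i j => (i != j) && has (fun m => msupp m == [set i; j]) gens.

Definition alpha (gens : seq 'X_{1..n}) (i j : 'I_n) : nat :=
  count (fun m => msupp m == [set i; j]) gens.

Definition is_leaf (e : rel 'I_n) (l : 'I_n) : bool := #|[set k | e l k]| == 1%N.

Definition girth_ge (e : rel 'I_n) (k : nat) : Prop :=
  forall c : seq 'I_n, (3 <= size c)%N -> (size c < k)%N -> uniq c -> ~~ cycle e c.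

Definition dist_ge (e : rel 'I_n) (x y : 'I_n) (k : nat) : Prop :=
  forall p : seq 'I_n, path e x p -> last x p = y -> (k <= size p)%N.

End MonIdeals.

(* Main.v *)
Require Import Defs.
From HB Require Import structures.
From mathcomp Require Import all_boot all_order all_algebra.
From mathcomp Require Import mpoly.
From Stdlib Require Import Classical ClassicalDescription.
Set Implicit Arguments. Unset Strict Implicit. Unset Printing Implicit Defensive.
Import GRing.Theory.
Local Open Scope ring_scope.

Lemma mpolyX_inj (K : fieldType) (n : nat) (m m' : 'X_{1..n}) :
  ('X_[m] : {mpoly K[n]}) = 'X_[m'] -> m = m'.
Proof.
move=> e; have := congr1 (mcoeff m) e; rewrite !mcoeffX eqxx.
by case: eqP => // _ /eqP; rewrite oner_eq0.
Qed.

Lemma ideal_mul (K : fieldType) (n : nat) (gens : seq 'X_{1..n}) r a :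
  mon_ideal gens a -> @mon_ideal K n gens (r * a).
Proof.
case=> h ->; exists (fun g => r * h g); rewrite mulr_sumr.
by apply: eq_bigr => g _; rewrite mulrA.
Qed.

Lemma ideal_add (K : fieldType) (n : nat) (gens : seq 'X_{1..n}) a b :
  mon_ideal gens a -> mon_ideal gens b -> @mon_ideal K n gens (a + b).
Proof.
case=> h ->; case=> h' ->; exists (fun g => h g + h' g); rewrite -big_split.
by apply: eq_bigr => g _; rewrite mulrDl.
Qed.

Lemma ideal_gen_mem (K : fieldType) (n : nat) (gens : seq 'X_{1..n}) m :
  uniq gens -> m \in gens -> @mon_ideal K n gens 'X_[m].
Proof.
move=> u mg; exists (fun p => if p == 'X_[m] then 1 else 0).
rewrite big_map (bigD1_seq m) //= eqxx mul1r big1 ?addr0 // => g ne.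
by case: eqP => [/mpolyX_inj e|_]; [rewrite e eqxx in ne|rewrite mul0r].
Qed.

Lemma ideal_le (K : fieldType) (n : nat) (gens : seq 'X_{1..n}) m G :
  uniq gens -> m \in gens -> (m <= G)%MM -> @mon_ideal K n gens 'X_[G].
Proof.
move=> u mg le; rewrite -(submK le) mpolyXD; apply: ideal_mul.
exact: ideal_gen_mem.
Qed.

Lemma ideal_mon (K : fieldType) (n : nat) (gens : seq 'X_{1..n}) G :
  @mon_ideal K n gens 'X_[G] -> exists2 m, m \in gens & (m <= G)%MM.
Proof.
case=> h e; apply: NNPP => hn.
have := congr1 (mcoeff G) e; rewrite mcoeffX eqxx raddf_sum big_map /=.
rewrite big1_seq ?oner_eq0 //; first by move/eqP; rewrite oner_eq0.
move=> g /= gg; rewrite mcoeffM big1 // => k /eqP eG.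
rewrite mcoeffX; case: eqP => [ek|]; last by rewrite mulr0.
by case: hn; exists g => //; rewrite eG ek lem_addl.
Qed.

Lemma prime_prod (K : fieldType) (n : nat) (P : polyset K n) (I : Type) (r : seq I) F :
  prime_ideal P -> P (\prod_(t <- r) F t) -> exists t, P (F t).
Proof.
case=> _ P1 Pm; elim: r => [|a r IH]; first by rewrite big_nil.
by rewrite big_cons => /Pm [H|H]; [exists a|exact: IH].
Qed.

Lemma prime_exp (K : fieldType) (n : nat) (P : polyset K n) x e :
  prime_ideal P -> P (x ^+ e) -> (0 < e)%N /\ P x.
Proof.
case=> _ P1 Pm; elim: e => [|e IH]; first by rewrite expr0.
by rewrite exprS => /Pm [H|/IH [_ H]].
Qed.

Lemma prime_X (K : fieldType) (n : nat) (P : polyset K n) (m : 'X_{1..n}) :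
  prime_ideal P -> P 'X_[m] -> exists t, (0 < m t)%N /\ P 'X_t.
Proof.
move=> pP; rewrite mpolyXE_id => /(prime_prod pP) [t /(prime_exp pP) [h1 h2]].
by exists t.
Qed.

Lemma ideal_X (K : fieldType) (n : nat) (P : polyset K n) (m : 'X_{1..n}) t :
  is_ideal P -> P 'X_t -> (0 < m t)%N -> P 'X_[m].
Proof.
case=> _ _ Pm Pt mt.
have le : (U_(t) <= m)%MM by rewrite lep1mP -lt0n.
by rewrite -(submK le) mpolyXD; apply: Pm.
Qed.

Lemma ideal_sum (K : fieldType) (n : nat) (P : polyset K n) (I : Type) (r : seq I) F :
  is_ideal P -> (forall t, P (F t)) -> P (\sum_(t <- r) F t).
Proof.
case=> P0 Pa _ H; elim: r => [|a r IH]; first by rewrite big_nil.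
by rewrite big_cons; apply: Pa.
Qed.

Lemma minprime_key (K : fieldType) (n : nat) (gens : seq 'X_{1..n}) (P : polyset K n) k :
  uniq gens -> minimal_prime (mon_ideal gens) P -> P 'X_k ->
  exists m, [/\ m \in gens, (0 < m k)%N & forall t, t != k -> (0 < m t)%N -> ~ P 'X_t].
Proof.
move=> u [pP IP minP] Pk; apply: NNPP => hn.
have H : forall m, m \in gens -> (0 < m k)%N -> exists t, [/\ t != k, (0 < m t)%N & P 'X_t].
  move=> m mg mk; apply: NNPP => hm; apply: hn; exists m; split => // t tk mt Pt.
  by apply: hm; exists t.
pose lam (t : 'I_n) : {mpoly K[n]} :=
  if excluded_middle_informative (P 'X_t /\ t != k) then 0 else 'X_t.
pose lq := [tuple lam t | t < n].
have phiX (m : 'X_{1..n}) : (exists t, [/\ t != k, (0 < m t)%N & P 'X_t]) -> (comp_mpoly lq) 'X_[m] = 0.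
  case=> t [tk mt Pt]; rewrite comp_mpolyX (bigD1 t) //= tnth_mktuple /lam.
  destruct (excluded_middle_informative _) as [a|hn']; last by case: hn'.
  by rewrite expr0n gtn_eqF // mul0r.
have phiX' (m : 'X_{1..n}) : ~ (exists t, [/\ t != k, (0 < m t)%N & P 'X_t]) -> (comp_mpoly lq) 'X_[m] = 'X_[m].
  move=> hm; rewrite comp_mpolyX mpolyXE_id; apply: eq_bigr => t _.
  rewrite tnth_mktuple /lam; destruct (excluded_middle_informative _) as [[Pt tk]|] => //.
  case: (posnP (m t)) => [->|mt]; first by rewrite !expr0.
  by case: hm; exists t.
have Qp : prime_ideal (fun f => (comp_mpoly lq) f = 0).
   split.
  - split; first exact: raddf0.
    + by move=> a b ha hb; rewrite raddfD /= ha hb addr0.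
    + by move=> r a ha; rewrite rmorphM /= ha mulr0.
  - by rewrite rmorph1 => /eqP; rewrite oner_eq0.
  - by move=> a b; rewrite rmorphM => /eqP; rewrite mulf_eq0 => /orP [] /eqP; [left|right].
have IQ : subideal (mon_ideal gens) (fun f => (comp_mpoly lq) f = 0).
  move=> f [h ->]; rewrite raddf_sum big_map big1_seq // => g /= gg.
  rewrite rmorphM /=; suff -> : 'X_[g] \mPo lq = 0 by rewrite mulr0.
  apply: phiX.
  have [t [mt Pt]] := prime_X pP (IP _ (ideal_gen_mem K u gg)).
  case: (eqVneq t k) => [e|tk]; last by exists t.
  by apply: H => //; rewrite -e.
have QP : subideal (fun f => (comp_mpoly lq) f = 0) P.
  move=> f hf; rewrite [f]mpolyE.
  have -> : \sum_(m <- msupp f) f@_m *: 'X_[m] =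
            \sum_(m <- msupp f) f@_m *: ('X_[m] - (comp_mpoly lq) 'X_[m]).
    symmetry; rewrite (eq_bigr (fun m => f@_m *: 'X_[m] - f@_m *: (comp_mpoly lq) 'X_[m])); last first.
      by move=> m _; rewrite scalerBr.
    by rewrite sumrB -comp_mpolyEX hf subr0.
  apply: ideal_sum; first by case: pP.
  move=> m; rewrite -mul_mpolyC; case: pP => iP _ _; case: (iP) => _ _ Pm; apply: Pm.
  case: (classic (exists t, [/\ t != k, (0 < m t)%N & P 'X_t])) => hm.
    rewrite phiX // subr0; case: hm => t [_ mt Pt]; exact: ideal_X iP Pt mt.
  by rewrite phiX' // subrr; case: iP.
have := minP _ Qp IQ QP _ Pk.
rewrite comp_mpolyXU -tnth_nth tnth_mktuple /lam.
destruct (excluded_middle_informative _) as [[a0 hk]|a]; first by move: hk; rewrite eqxx.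
move=> e; have := congr1 (mcoeff U_(k)) e.
by rewrite mcoeffXU eqxx mcoeff0 => /eqP; rewrite oner_eq0.
Qed.
Local Close Scope ring_scope.

Lemma gadj_sym n (gens : seq 'X_{1..n}) x y : gadj gens x y = gadj gens y x.
Proof. by rewrite /gadj eq_sym setUC. Qed.

Lemma gadj_neq n (gens : seq 'X_{1..n}) x y : gadj gens x y -> x != y.
Proof. by case/andP. Qed.

Ltac solve_uniq :=
  rewrite /= !inE !negb_or /=; repeat (apply/andP; split); try done;
  try (by rewrite eq_sym); try (by apply: gadj_neq); try (by rewrite eq_sym; apply: gadj_neq).

Lemma tri n (gens : seq 'X_{1..n}) a b c : girth_ge (gadj gens) 6 ->
  gadj gens a b -> gadj gens b c -> gadj gens c a -> False.
Proof.
move=> G ab bc ca.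
have U : uniq [:: a; b; c].
  have := gadj_neq ab; have := gadj_neq bc; have := gadj_neq ca.
  move=> h1 h2 h3; solve_uniq.
by have := G [:: a; b; c] isT isT U; rewrite /= ab bc ca.
Qed.

Lemma quad n (gens : seq 'X_{1..n}) a b c d : girth_ge (gadj gens) 6 ->
  gadj gens a b -> gadj gens b c -> gadj gens c d -> gadj gens d a ->
  a != c -> b != d -> False.
Proof.
move=> G ab bc cd da ac bd.
have U : uniq [:: a; b; c; d].
  have := gadj_neq ab; have := gadj_neq bc; have := gadj_neq cd; have := gadj_neq da.
  move=> h1 h2 h3 h4; solve_uniq.
by have := G [:: a; b; c; d] isT isT U; rewrite /= ab bc cd da.
Qed.

Lemma pent n (gens : seq 'X_{1..n}) a b c d e : girth_ge (gadj gens) 6 ->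
  gadj gens a b -> gadj gens b c -> gadj gens c d -> gadj gens d e -> gadj gens e a ->
  a != c -> a != d -> b != d -> b != e -> c != e -> False.
Proof.
move=> G ab bc cd de ea ac ad bd be ce.
have U : uniq [:: a; b; c; d; e].
  have := gadj_neq ab; have := gadj_neq bc; have := gadj_neq cd; have := gadj_neq de;
  have := gadj_neq ea.
  move=> h1 h2 h3 h4 h5; solve_uniq.
by have := G [:: a; b; c; d; e] isT isT U; rewrite /= ab bc cd de ea.
Qed.

Lemma supp2_mem n (m : 'X_{1..n}) i j t : Defs.msupp m = [set i; j] ->
  (0 < m t)%N = (t == i) || (t == j).
Proof. by move=> e; have := congr1 (fun A : {set 'I_n} => t \in A) e; rewrite /= !inE. Qed.

Lemma supp2_le n (m G : 'X_{1..n}) i j : Defs.msupp m = [set i; j] ->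
  (m i <= G i)%N -> (m j <= G j)%N -> (m <= G)%MM.
Proof.
move=> e hi hj; apply/mnm_lepP => t.
case: (posnP (m t)) => [->//|]; rewrite (supp2_mem _ e).
by case/orP => /eqP ->.
Qed.

Lemma orient n (gens : seq 'X_{1..n}) i j : minimal_monomial_gens gens ->
  (2 <= alpha gens i j)%N ->
  exists A B, [/\ A \in gens, B \in gens, Defs.msupp A = [set i; j] & Defs.msupp B = [set i; j]]
             /\ (A i < B i)%N /\ (B j < A j)%N.
Proof.
case=> u Hm; rewrite /alpha -size_filter.
have : uniq [seq m <- gens | Defs.msupp m == [set i; j]] by exact: filter_uniq.
have mf m : m \in [seq m <- gens | Defs.msupp m == [set i; j]] -> m \in gens /\ Defs.msupp m = [set i; j].
  by rewrite mem_filter => /andP [/eqP -> ->].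
case: [seq m <- gens | Defs.msupp m == [set i; j]] mf => [|m1 [|m2 s]] //= mf.
rewrite inE negb_or => /andP [/andP [ne _] _] _.
have [g1 s1] := mf m1 (mem_head _ _).
have [g2 s2] : m2 \in gens /\ Defs.msupp m2 = [set i; j] by apply: mf; rewrite !inE eqxx orbT.
have n12 := Hm _ _ g1 g2 ne.
have n21 : ~~ mdiv m2 m1 by apply: Hm => //; rewrite eq_sym.
move/forallPn: n12 => [t]; rewrite -ltnNge => lt1.
move/forallPn: n21 => [t']; rewrite -ltnNge => lt2.
have : (0 < m1 t)%N by apply: leq_ltn_trans lt1.
have : (0 < m2 t')%N by apply: leq_ltn_trans lt2.
rewrite (supp2_mem _ s1) (supp2_mem _ s2).
case/orP => /eqP e'; case/orP => /eqP e; subst t t'.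
- by have := ltn_trans lt1 lt2; rewrite ltnn.
- by exists m1, m2; split.
- by exists m2, m1; split.
- by have := ltn_trans lt1 lt2; rewrite ltnn.
Qed.

Lemma core (K : fieldType) (n : nat) (gens : seq 'X_{1..n})
  (Hmin : minimal_monomial_gens gens)
  (Hsupp2 : forall m, m \in gens -> support2 m)
  (Hgirth : girth_ge (gadj gens) 6)
  (i j : 'I_n) (Hedge : gadj gens i j) (A B : 'X_{1..n})
  (Ag : A \in gens) (Bg : B \in gens) (As : Defs.msupp A = [set i; j])
  (Bs : Defs.msupp B = [set i; j]) (ABi : (A i < B i)%N) (ABj : (B j < A j)%N)
  (Hleaf : forall l, is_leaf (gadj gens) l -> dist_ge (gadj gens) i l 2) :
  ~ (forall f : {mpoly K[n]}, symb1 (@mon_ideal K n gens) f <-> @mon_ideal K n gens f).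
Proof.
have u := Hmin.1.
have ij := gadj_neq Hedge.
pose D := (\sum_(m <- gens) mdeg m)%N.
have leD m t : m \in gens -> (m t <= D)%N.
  move=> mg; apply: (@leq_trans (mdeg m)).
    by rewrite mdegE (bigD1 t) //= leq_addr.
  by rewrite /D (big_rem m mg) /= leq_addr.
pose W t := [&& t != i, t != j & [exists k, [&& gadj gens i k, k != j & gadj gens k t]]].
pose F := [multinom ((t == i) * A i + (t == j) * B j + W t * D)%N | t < n].
have Wi : W i = false by rewrite /W eqxx.
have Wj : W j = false by rewrite /W eqxx andbF.
have Fi : F i = A i by rewrite mnmE eqxx Wi (negbTE ij) /= mul1n !addn0.
have ji : j != i by rewrite eq_sym.
have Fj : F j = B j by rewrite mnmE eqxx Wj (negbTE ji) /= mul1n !addn0.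
have FW w : W w -> (D <= F w)%N by move=> Ww; rewrite mnmE Ww mul1n leq_addl.
have Fpos t : (0 < F t)%N -> [|| t == i, t == j | W t].
  rewrite mnmE; case: (t == i) => //; case: (t == j) => //; case: (W t) => //.
have Welim w : W w -> exists k, [/\ w != i, w != j, gadj gens i k, k != j & gadj gens k w].
  by case/and3P => wi wj /existsP [k /and3P [ik kj kw]]; exists k.
have E1 w : W w -> ~~ gadj gens i w.
  move/Welim => [k [_ _ ik _ kw]]; apply/negP => iw.
  by apply: (tri Hgirth ik kw); rewrite gadj_sym.
have E2 w : W w -> ~~ gadj gens j w.
  move/Welim => [k [wi _ ik kj kw]]; apply/negP => jw.
  apply: (quad Hgirth ik kw _ _ _ kj); rewrite 1?gadj_sym //.
  by rewrite eq_sym.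
have E3 w w' : W w -> W w' -> ~~ gadj gens w w'.
  move=> Ww Ww'; have [k [wi wj ik kj kw]] := Welim w Ww.
  have [k' [wi' wj' ik' kj' kw']] := Welim w' Ww'.
  apply/negP => ww'.
  have wk' : w != k' by apply: contraNneq (E1 w Ww) => ->.
  have w'k : w' != k by apply: contraNneq (E1 w' Ww') => ->.
  case: (eqVneq k k') => [ekk|nkk].
    subst k'; apply: (tri Hgirth kw ww'); rewrite gadj_sym //.
  apply: (pent Hgirth ik kw ww' _ _ _ _ _ nkk wk') => //.
  - by rewrite gadj_sym.
  - by rewrite gadj_sym.
  - by rewrite eq_sym.
  - by rewrite eq_sym.
  - by rewrite eq_sym.
have noedge x y : [|| x == i, x == j | W x] -> [|| y == i, y == j | W y] ->
    gadj gens x y -> [set x; y] = [set i; j].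
  move=> hx hy; case/or3P: hx => [/eqP->|/eqP->|Wx]; case/or3P: hy => [/eqP->|/eqP->|Wy] xy.
  - by move: (gadj_neq xy); rewrite eqxx.
  - by [].
  - by move: (E1 _ Wy); rewrite xy.
  - by rewrite setUC.
  - by move: (gadj_neq xy); rewrite eqxx.
  - by move: (E2 _ Wy); rewrite xy.
  - by move: (E1 _ Wx); rewrite gadj_sym xy.
  - by move: (E2 _ Wx); rewrite gadj_sym xy.
  - by move: (E3 _ _ Wx Wy); rewrite xy.
have notI m : m \in gens -> (m <= F)%MM -> False.
  move=> mg le; have [x [y [xy ms]]] := Hsupp2 m mg.
  have mx : (0 < m x)%N by rewrite (supp2_mem _ ms) eqxx.
  have my : (0 < m y)%N by rewrite (supp2_mem _ ms) eqxx orbT.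
  have xny : x != y by rewrite neq_ltn xy.
  have axy : gadj gens x y by rewrite /gadj xny; apply/hasP; exists m => //; rewrite ms.
  have Fx : (0 < F x)%N by apply: leq_trans mx (mnm_lepP le x).
  have Fy : (0 < F y)%N by apply: leq_trans my (mnm_lepP le y).
  have ms' := noedge _ _ (Fpos _ Fx) (Fpos _ Fy) axy; rewrite ms' in ms.
  have mA : mdiv m A.
    apply: (supp2_le ms).
      by rewrite -Fi; apply: (mnm_lepP le).
    by apply: leq_trans (ltnW ABj); rewrite -Fj; apply: (mnm_lepP le).
  have eA : m = A by apply: contraTeq mA; apply: Hmin.2.
  subst m; have := mnm_lepP le j; rewrite Fj => h.
  by rewrite leqNgt ABj in h.
move=> Hiff.
suff hs : symb1 (@mon_ideal K n gens) 'X_[F].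
  have [m mg le] := ideal_mon (proj1 (Hiff _) hs); exact: notI mg le.
move=> P mP; have [pP IP _] := mP.
have notPg k c : ~ P 'X_k -> ~ P 'X_[U_(k) *+ c].
  move=> nk /(prime_X pP) [t [tp Pt]]; move: tp; rewrite mulmnE mnm1E.
  by case: eqP => [e|]; [rewrite -e in Pt|rewrite mul0n].
case: (classic (P 'X_i)) => Pi.
- have [m [mg mi Hm]] := minprime_key u mP Pi.
  have [x [y [xy ms]]] := Hsupp2 m mg.
  have [k [ki ms']] : exists k, k != i /\ Defs.msupp m = [set i; k].
    move: mi; rewrite (supp2_mem _ ms) => /orP [/eqP ex|/eqP ey].
      by exists y; rewrite ms ex; split => //; rewrite neq_ltn xy orbT.
    by exists x; rewrite ms ey setUC; split; rewrite // neq_ltn xy.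
  have nPk : ~ P 'X_k.
    by apply: (Hm k ki); rewrite (supp2_mem _ ms') eqxx orbT.
  case: (eqVneq k j) => [ekj|kj].
  + rewrite ekj in nPk.
    exists 'X_[U_(j) *+ A j]; split; first exact: notPg.
    rewrite -mpolyXD; apply: (ideal_le K u Ag); apply: (supp2_le As).
      by rewrite mnmDE mulmnE mnm1E (negbTE ji) mul0n add0n Fi.
    by rewrite mnmDE mulmnE mnm1E eqxx mul1n leq_addr.
  + have ik : gadj gens i k.
      by rewrite /gadj eq_sym ki; apply/hasP; exists m => //; rewrite ms'.
    have nl : ~~ is_leaf (gadj gens) k.
      apply/negP => /Hleaf /(_ [:: k]) h.
      have : path (gadj gens) i [:: k] by rewrite /= ik.
      by move/h => /(_ erefl).
    have [w [kw wi]] : exists w, gadj gens k w /\ w != i.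
      apply: NNPP => hn; move: nl; rewrite /is_leaf.
      have -> : [set t | gadj gens k t] = [set i].
        apply/setP => t; rewrite !inE; apply/idP/eqP => [kt|->]; last by rewrite gadj_sym.
        by apply: NNPP => ti; apply: hn; exists t; split => //; apply/eqP.
      by rewrite cards1.
    have [m' m'g /eqP m's] := hasP (proj2 (andP kw)).
    have Ww : W w.
      rewrite /W wi /=; apply/andP; split.
        apply/negP => /eqP ewj; rewrite ewj in kw.
        by apply: (tri Hgirth ik kw); rewrite gadj_sym.
      by apply/existsP; exists k; rewrite ik kj kw.
    exists 'X_[U_(k) *+ m' k]; split; first exact: notPg.
    rewrite -mpolyXD; apply: (ideal_le K u m'g); apply: (supp2_le m's).
      by rewrite mnmDE mulmnE mnm1E eqxx mul1n leq_addr.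
    rewrite mnmDE; apply: leq_trans (leq_addl _ _); apply: leq_trans (FW _ Ww).
    exact: leD.
- exists 'X_[U_(i) *+ B i]; split; first exact: notPg.
  rewrite -mpolyXD; apply: (ideal_le K u Bg); apply: (supp2_le Bs).
    by rewrite mnmDE mulmnE mnm1E eqxx mul1n leq_addr.
  by rewrite mnmDE Fj leq_addl.
Qed.

Theorem proposition3p3 (K : fieldType) (n : nat) (gens : seq 'X_{1..n})
  (Hmin : minimal_monomial_gens gens)
  (Hsupp2 : forall m, m \in gens -> support2 m)
  (Hgirth : girth_ge (gadj gens) 6)
  (i j : 'I_n) (Hedge : gadj gens i j) (Halpha : (2 <= alpha gens i j)%N)
  (Hleaf : (forall l, is_leaf (gadj gens) l -> dist_ge (gadj gens) i l 2) \/
           (forall l, is_leaf (gadj gens) l -> dist_ge (gadj gens) j l 2)) :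
  ~ (forall f : {mpoly K[n]}, symb1 (@mon_ideal K n gens) f <-> @mon_ideal K n gens f).
Proof.
case: Hleaf => Hl.
  have [A [B [[Ag Bg As Bs] [h1 h2]]]] := orient Hmin Halpha.
  exact: (core Hmin Hsupp2 Hgirth Hedge Ag Bg As Bs h1 h2 Hl).
have Halpha' : (2 <= alpha gens j i)%N by rewrite /alpha setUC.
have Hedge' : gadj gens j i by rewrite gadj_sym.
have [A [B [[Ag Bg As Bs] [h1 h2]]]] := orient Hmin Halpha'.
exact: (core Hmin Hsupp2 Hgirth Hedge' Ag Bg As Bs h1 h2 Hl).
Qed.
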